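(* Let $M$ be an infinite subset of $\mathbb{N}$ and let $k,l\in\mathbb{N}$. For every finite partition $\mathrm{Plm}_l([M]^k)=\bigcup_{j=1}^p P_j$ there exist an infinite $L\subseteq M$ and $1\le j_0\le p$ such that $\mathrm{Plm}_l([L]^k)\subseteq P_{j_0}$.
   Context: For $M\subseteq\mathbb{N}$ infinite and $k\in\mathbb{N}$, $[M]^k$ is the set of $k$-element subsets of $M$; an element $s\in[M]^k$ is identified with its increasing enumeration $s(1)<\dots<s(k)$. A finite sequence $(s_j)_{j=1}^l$ in $[M]^k$ is a plegma family if (i) for every $1\le i\le k$, $s_1(i)<s_2(i)<\dots<s_l(i)$, and (ii) for every $1\le i<k$, $s_l(i)<s_1(i+1)$. $\mathrm{Plm}_l([M]^k)$ denotes the set of all plegma families of length $l$ in $[M]^k$. *)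

(* Defs.v *)
From mathcomp Require Import all_boot.
Set Implicit Arguments. Unset Strict Implicit. Unset Printing Implicit Defensive.

Definition infinite_set (M : nat -> Prop) : Prop :=
  forall n : nat, exists m : nat, n <= m /\ M m.

Definition subset_of (L M : nat -> Prop) : Prop := forall x, L x -> M x.

(* s \in [M]^k, s given by its increasing enumeration s(1)<...<s(k)
   (0-indexed here: nth 0 s 0 < ... < nth 0 s (k-1)). *)
Definition in_ksubsets (M : nat -> Prop) (k : nat) (s : seq nat) : Prop :=
  size s = k /\ sorted ltn s /\ (forall x, x \in s -> M x).

(* (s_j)_{j=1}^l is a plegma family in [M]^k; F = [:: s_1; ...; s_l]
   (0-indexed: s_{j+1} = nth [::] F j, s(i+1) = nth 0 s i). *)
Definition plegma (M : nat -> Prop) (k l : nat) (F : seq (seq nat)) : Prop :=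
  size F = l /\
  (forall s, s \in F -> in_ksubsets M k s) /\
  (forall i j, i < k -> j.+1 < l ->
     nth 0 (nth [::] F j) i < nth 0 (nth [::] F j.+1) i) /\
  (forall i, i.+1 < k -> 0 < l ->
     nth 0 (nth [::] F l.-1) i < nth 0 (nth [::] F 0) i.+1).

(* Main.v *)
Require Import Defs.
From mathcomp Require Import all_boot zify.
From Stdlib Require Import ClassicalEpsilon Classical.
Set Implicit Arguments. Unset Strict Implicit. Unset Printing Implicit Defensive.

Lemma pigeon (p : nat) (f : nat -> nat) :
  (exists N, forall i, N <= i -> f i < p) ->
  exists j0, j0 < p /\ forall n, exists i, n <= i /\ f i = j0.
Proof.
elim: p f => [|p IH] f [N HN].
  by have := HN N (leqnn N).
case: (classic (forall n, exists i, n <= i /\ f i = p)) => H.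
  by exists p; split.
have [n Hn] := not_all_ex_not _ _ H.
have [|j0 [Hj Hinf]] := IH f.
  exists (maxn N n) => i Hi.
  have := HN i ltac:(lia).
  have : f i <> p by move=> E; apply: Hn; exists i; split => //; lia.
  lia.
by exists j0; split => //; lia.
Qed.

Lemma ks_mono (A B : nat -> Prop) n s :
  subset_of A B -> in_ksubsets A n s -> in_ksubsets B n s.
Proof. by move=> H [h1 [h2 h3]]; split => //; split => // x /h3 /H. Qed.

Lemma ks_cons (P : nat -> Prop) n a t :
  P a -> in_ksubsets (fun x => P x /\ a < x) n t -> in_ksubsets P n.+1 (a::t).
Proof.
move=> Pa [h1 [h2 h3]]; split; first by rewrite /= h1.
split.
  rewrite /= (path_sortedE ltn_trans) h2 andbT; apply/allP => x /h3 [] //.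
by move=> x; rewrite inE => /orP [/eqP -> //|/h3 []].
Qed.

Lemma ks_uncons (P : nat -> Prop) n a t :
  in_ksubsets P n.+1 (a::t) -> P a /\ in_ksubsets (fun x => P x /\ a < x) n t.
Proof.
move=> [h1 [h2 h3]]; split; first by apply: h3; rewrite inE eqxx.
move: h2; rewrite /= (path_sortedE ltn_trans) => /andP [/allP Ha h2].
split; first by case: h1.
split => // x xt; split; first by apply: h3; rewrite inE xt orbT.
exact: Ha.
Qed.

Definition stepP (n p : nat) (c : seq nat -> nat) (M0 M : nat -> Prop)
  (x : nat * (nat -> Prop) * nat) :=
  infinite_set M -> subset_of M M0 ->
  M x.1.1 /\ infinite_set x.1.2 /\ (forall y, x.1.2 y -> M y /\ x.1.1 < y)
  /\ x.2 < p /\ (forall t, in_ksubsets x.1.2 n t -> c (x.1.1 :: t) = x.2).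

Definition inh : inhabited (nat * (nat -> Prop) * nat) := inhabits (0, fun _ => True, 0).

Definition step n p c M0 M := epsilon inh (stepP n p c M0 M).

Fixpoint dom n p c M0 (i : nat) : nat -> Prop :=
  match i with 0 => M0 | i.+1 => (step n p c M0 (dom n p c M0 i)).1.2 end.

Theorem ramsey (p n : nat) : forall (M : nat -> Prop) (c : seq nat -> nat),
  infinite_set M -> (forall s, in_ksubsets M n s -> c s < p) ->
  exists L j0, infinite_set L /\ subset_of L M /\ j0 < p /\
    (forall s, in_ksubsets L n s -> c s = j0).
Proof.
elim: n => [|n IH] M0 c HM Hc.
  exists M0, (c [::]); split => //; split => //; split.
    by apply: Hc; split => //; split => //.
  by move=> s [/size0nil -> _].
have Hex : forall M, exists x, stepP n p c M0 M x.
  move=> M; case: (classic (infinite_set M /\ subset_of M M0)) => [[HiM HsM]|Hn]; last first.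
    by exists (0, fun _ => True, 0) => H1 H2; case: Hn.
  have [a [_ Ma]] := HiM 0.
  pose M' := fun x => M x /\ a < x.
  have HiM' : infinite_set M'.
    move=> m; have [y [Hy My]] := HiM (maxn m a.+1); exists y; rewrite /M'; split; [lia|split=>//; lia].
  have [L [j [HiL [HsL [Hj HL]]]]] := IH M' (fun t => c (a :: t)) HiM'
    (fun t Ht => Hc _ (ks_mono HsM (ks_cons Ma Ht))).
  exists (a, L, j) => _ _ /=; split; [done|split; [done|split; [by move=> y /HsL|by split]]].
have Hspec : forall M, stepP n p c M0 M (step n p c M0 M).
  by move=> M; apply: epsilon_spec.
pose D := dom n p c M0.
pose a i := (step n p c M0 (D i)).1.1.
pose col i := (step n p c M0 (D i)).2.
have HD : forall i, infinite_set (D i) /\ subset_of (D i) M0.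
  elim => [|i [IH1 IH2]] /=; first by split.
  have [_ [H2 [H3 _]]] := Hspec _ IH1 IH2.
  split => // y /H3 [/IH2] //.
have Hstep : forall i, D i (a i) /\ (forall y, D i.+1 y -> D i y /\ a i < y)
   /\ col i < p /\ (forall t, in_ksubsets (D i.+1) n t -> c (a i :: t) = col i).
  move=> i; have [H1 H2] := HD i.
  by have [? [_ [? [? ?]]]] := Hspec _ H1 H2.
have Hmono : forall i j, i <= j -> subset_of (D j) (D i).
  move=> i j /subnK <-; elim: (j - i) => [|d IHd] //= y Hy.
  apply: IHd; rewrite addSn in Hy; by have [_ [/(_ _ Hy) [] ]] := Hstep (d + i).
have Hainc : forall i j, i < j -> a i < a j.
  move=> i j Hij; have [Ha _] := Hstep j.
  have [_ [H _]] := Hstep i.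
  by have [] := H _ (Hmono _ _ Hij _ Ha).
have Hage : forall i, i <= a i.
  elim => [|i IHi] //; have := Hainc i i.+1 (ltnSn i); lia.
have [j0 [Hj0 Hinf]] := pigeon (f := col) (p := p) (ex_intro _ 0 (fun i _ => proj1 (proj2 (proj2 (Hstep i))))).
exists (fun x => exists i, x = a i /\ col i = j0), j0; split.
  move=> m; have [i [Hi Ci]] := Hinf m; exists (a i); split; last by exists i.
  by have := Hage i; lia.
split.
  move=> x [i [-> _]]; have [Ha _] := Hstep i; exact: (proj2 (HD i)).
split => // s Hs.
case: s Hs => [|x t] Hs; first by case: Hs.
have [[i [Ex Ci]] Ht] := ks_uncons Hs.
subst x; have [_ [_ [_ Hh]]] := Hstep i; rewrite Hh //.
apply: ks_mono Ht => y [[j [-> _]] Hlt].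
have Hij : i < j.
  case: (ltnP i j) => // Hji; move: Hlt; rewrite leq_eqVlt in Hji.
  case/orP: Hji => [/eqP ->|/Hainc]; lia.
exact: Hmono Hij _ (proj1 (Hstep j)).
Qed.

Definition unflat k l (u : seq nat) :=
  mkseq (fun j => mkseq (fun i => nth 0 u (i*l+j)) k) l.
Definition flat k l (F : seq (seq nat)) :=
  mkseq (fun m => nth 0 (nth [::] F (m %% l)) (m %/ l)) (k*l).

Lemma idx_lt k l i j : i < k -> j < l -> i * l + j < k * l.
Proof. move=> Hi Hj; nia. Qed.

Lemma srt_lt (u : seq nat) a b : sorted ltn u -> a < b -> b < size u ->
  nth 0 u a < nth 0 u b.
Proof.
move=> Hs Hab Hb; apply: (sorted_ltn_nth ltn_trans) => //; rewrite inE /=; lia.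
Qed.

Lemma plegma_unflat M k l u : in_ksubsets M (k*l) u -> plegma M k l (unflat k l u).
Proof.
move=> [Hsz [Hsrt Hmem]].
have E : forall i j, i < k -> j < l -> nth 0 (nth [::] (unflat k l u) j) i = nth 0 u (i*l+j).
  by move=> i j Hi Hj; rewrite /unflat nth_mkseq // nth_mkseq.
split; first by rewrite size_mkseq.
split.
  move=> s /(nthP [::]) [j]; rewrite size_mkseq => Hj <-.
  rewrite /unflat nth_mkseq //; split; first by rewrite size_mkseq.
  split.
    apply/(sortedP 0) => i; rewrite size_mkseq => Hi.
    rewrite !nth_mkseq; try lia.
    apply: srt_lt => //; first lia.
    rewrite Hsz; apply: idx_lt => //.
  move=> x /(nthP 0) [i]; rewrite size_mkseq => Hi <-.
  rewrite nth_mkseq //; apply: Hmem; apply: mem_nth; rewrite Hsz; exact: idx_lt.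
split.
  move=> i j Hi Hj; rewrite !E //; try lia.
  apply: srt_lt => //; first lia.
  rewrite Hsz; apply: idx_lt => //.
move=> i Hi Hl; rewrite !E //; try lia.
apply: srt_lt => //; first nia.
rewrite Hsz; apply: idx_lt => //.
Qed.

Lemma nth_flat k l F i j : i < k -> j < l ->
  nth 0 (flat k l F) (i*l+j) = nth 0 (nth [::] F j) i.
Proof.
move=> Hi Hj; rewrite /flat nth_mkseq; last exact: idx_lt.
have -> : (i * l + j) %% l = j by rewrite modnMDl modn_small.
have -> : (i * l + j) %/ l = i by rewrite divnMDl ?divn_small ?addn0 //; lia.
done.
Qed.

Lemma flat_ks L k l F : plegma L k l F -> in_ksubsets L (k*l) (flat k l F).
Proof.
move=> [Hsz [Hks [H1 H2]]].
have Hdec : forall m, m < k * l -> exists i j, [/\ i < k, j < l & m = i * l + j].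
  move=> m Hm; have Hl : 0 < l by nia.
  exists (m %/ l), (m %% l); split; first by rewrite ltn_divLR.
    by rewrite ltn_mod.
  exact: divn_eq.
split; first by rewrite size_mkseq.
split.
  apply/(sortedP 0) => m; rewrite size_mkseq => Hm.
  have [i [j [Hi Hj Em]]] := Hdec m ltac:(lia).
  rewrite Em nth_flat //.
  case: (ltnP j.+1 l) => Hjl.
    by rewrite -addnS nth_flat //; apply: H1.
  have Ej : j = l.-1 by lia.
  have Hik : i.+1 < k.
    have : i * l + j + 1 < k * l by lia.
    subst j; nia.
  have -> : (i * l + j).+1 = i.+1 * l + 0 by lia.
  rewrite nth_flat //; last lia.
  by rewrite Ej; apply: H2 => //; lia.
move=> x /(nthP 0) [m]; rewrite size_mkseq => Hm <-.
have [i [j [Hi Hj Em]]] := Hdec m Hm.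
rewrite Em nth_flat //.
have Hin : nth [::] F j \in F by apply: mem_nth; rewrite Hsz.
have [Hs [_ Hm']] := Hks _ Hin.
by apply: Hm'; apply: mem_nth; rewrite Hs.
Qed.

Lemma unflat_flat L k l F : plegma L k l F -> unflat k l (flat k l F) = F.
Proof.
move=> [Hsz [Hks _]].
rewrite -[RHS](mkseq_nth [::]) Hsz.
apply: (@eq_from_nth _ [::]); rewrite !size_mkseq // => j Hj.
rewrite !nth_mkseq //.
have Hin : nth [::] F j \in F by apply: mem_nth; rewrite Hsz.
have [Hs _] := Hks _ Hin.
rewrite -[RHS](mkseq_nth 0) Hs.
apply: (@eq_from_nth _ 0); rewrite !size_mkseq // => i Hi.
rewrite [in RHS]nth_mkseq // (nth_mkseq _ (fun i0 => nth 0 (flat k l F) (i0 * l + j)) Hi). exact: nth_flat.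
Qed.

Theorem mainTheorem1 (M : nat -> Prop) (k l p : nat)
    (c : seq (seq nat) -> nat) :
  infinite_set M ->
  (forall F, plegma M k l F -> c F < p) ->
  exists L : nat -> Prop, exists j0 : nat,
    infinite_set L /\ subset_of L M /\ j0 < p /\
    (forall F, plegma L k l F -> c F = j0).
Proof.
move=> HM Hc.
have [L [j0 [HL [HsL [Hj HH]]]]] := ramsey (n := k * l) (p := p) (c := fun u => c (unflat k l u)) HM
  (fun u Hu => Hc _ (plegma_unflat Hu)).
exists L, j0; do !split => //.
move=> F HF; rewrite -(unflat_flat HF); exact: HH (flat_ks HF).
Qed.
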